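(* Let $v$ satisfy the standing assumptions and the doubling condition. Let $f(z)=\sum_k a_{n_k}z^{n_k}$ be a holomorphic function in $\mathbb{D}$ given by a Hadamard gap series ($n_k$ positive integers, $n_{k+1}\ge\lambda n_k$, $\lambda>1$). If $\operatorname{Re}f\in k^\infty_v$, then $\operatorname{Re}f\in h^\infty_v$ and $\operatorname{Im}f\in h^\infty_v$.
   Context: Standing assumptions: $v:[0,1)\to[1,\infty)$ is positive, increasing, continuous, $v(0)=1$, $\lim_{r\to1}v(r)=+\infty$. Doubling condition: there is $D\ge1$ with $v(1-d)\le D\,v(1-2d)$ for all $d\in(0,1/2]$. $k^\infty_v$ is the set of real harmonic $u$ on $\mathbb{D}$ with $u(z)\le Kv(|z|)$ for some $K>0$; $h^\infty_v$ is the set of real harmonic $u$ on $\mathbb{D}$ with $|u(z)|\le Kv(|z|)$ for some $K>0$. *)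

(* Defs.v *)
From Stdlib Require Import Reals.
Open Scope R_scope.

Definition Cpx := (R * R)%type.
Definition Cmul (z w : Cpx) : Cpx :=
  (fst z * fst w - snd z * snd w, fst z * snd w + snd z * fst w).
Fixpoint Cpow (z : Cpx) (n : nat) : Cpx :=
  match n with O => (1, 0) | S m => Cmul z (Cpow z m) end.
Definition Cmod (z : Cpx) : R := sqrt (fst z * fst z + snd z * snd z).
Definition in_disc (z : Cpx) : Prop := Cmod z < 1.

Definition gap_partial (c : nat -> Cpx) (n : nat -> nat) (z : Cpx) (N : nat) : Cpx :=
  (sum_f_R0 (fun k => fst (Cmul (c k) (Cpow z (n k)))) N,
   sum_f_R0 (fun k => snd (Cmul (c k) (Cpow z (n k)))) N).

Definition hadamard_gap (n : nat -> nat) (lam : R) : Prop :=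
  1 < lam /\ (forall k, (1 <= n k)%nat) /\ (forall k, INR (n (S k)) >= lam * INR (n k)).

Definition weight (v : R -> R) : Prop :=
  v 0 = 1 /\
  (forall r, 0 <= r < 1 -> 1 <= v r) /\
  (forall r s, 0 <= r -> r <= s -> s < 1 -> v r <= v s) /\
  (forall r, 0 <= r < 1 -> limit1_in v (fun x => 0 <= x < 1) (v r) r) /\
  (forall M, exists delta, 0 < delta /\ forall r, 1 - delta < r < 1 -> M < v r).

Definition doubling (v : R -> R) : Prop :=
  exists D, 1 <= D /\ forall d, 0 < d <= 1/2 -> v (1 - d) <= D * v (1 - 2 * d).

(* k^infty_v and h^infty_v membership (harmonicity of Re f, Im f is automatic
   here since they are real/imaginary parts of a holomorphic function). *)
Definition in_k_v (v : R -> R) (u : Cpx -> R) : Prop :=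
  exists K, 0 < K /\ forall z, in_disc z -> u z <= K * v (Cmod z).
Definition in_h_v (v : R -> R) (u : Cpx -> R) : Prop :=
  exists K, 0 < K /\ forall z, in_disc z -> Rabs (u z) <= K * v (Cmod z).

(* Main.v *)
Require Import Defs.
From Stdlib Require Import Reals Lra Lia ZArith.
Open Scope R_scope.


Fixpoint fsum (g : nat -> R) (M : nat) : R :=
  match M with O => 0 | S m => fsum g m + g m end.

Lemma fsum_plus g h M : fsum (fun j => g j + h j) M = fsum g M + fsum h M.
Proof. induction M; simpl; [lra|rewrite IHM; lra]. Qed.
Lemma fsum_scal a g M : fsum (fun j => a * g j) M = a * fsum g M.
Proof. induction M; simpl; [lra|rewrite IHM; lra]. Qed.
Lemma fsum_le g h M : (forall j, (j < M)%nat -> g j <= h j) -> fsum g M <= fsum h M.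
Proof. induction M; simpl; intros H; [lra|]. assert (g M <= h M) by (apply H; lia).
 assert (fsum g M <= fsum h M) by (apply IHM; intros; apply H; lia). lra. Qed.
Lemma fsum_ext g h M : (forall j, (j < M)%nat -> g j = h j) -> fsum g M = fsum h M.
Proof. induction M; simpl; intros H; [lra|]. rewrite (H M) by lia. rewrite IHM; auto. Qed.
Lemma fsum_const a M : fsum (fun _ => a) M = INR M * a.
Proof. induction M; simpl fsum; [simpl; lra|rewrite IHM, S_INR; lra]. Qed.
Lemma fsum_tele f M : fsum (fun j => f (S j) - f j) M = f M - f O.
Proof. induction M; simpl; [lra|rewrite IHM; lra]. Qed.
Lemma sum_f_fsum f N : sum_f_R0 f N = fsum f (S N).
Proof. induction N; simpl; [lra|rewrite IHN; simpl; lra]. Qed.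
Lemma fsum_swap (f : nat -> nat -> R) M N :
  sum_f_R0 (fun k => fsum (fun j => f j k) M) N = fsum (fun j => sum_f_R0 (fun k => f j k) N) M.
Proof. induction M; simpl.
 - induction N; [simpl; lra|]. simpl in *. rewrite IHN; lra.
 - rewrite sum_plus, IHM; reflexivity. Qed.
Lemma fsum_cv (g : nat -> nat -> R) (l : nat -> R) M :
  (forall j, (j < M)%nat -> Un_cv (g j) (l j)) ->
  Un_cv (fun N => fsum (fun j => g j N) M) (fsum l M).
Proof. induction M; intros H; simpl.
 - intros e He; exists O; intros; unfold Rdist; rewrite Rminus_0_r, Rabs_R0; lra.
 - apply CV_plus; [apply IHM; intros; apply H; lia| apply H; lia]. Qed.
Lemma fsum_abs g M : Rabs (fsum g M) <= fsum (fun j => Rabs (g j)) M.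
Proof. induction M; simpl; [rewrite Rabs_R0; lra|].
 eapply Rle_trans; [apply Rabs_triang|lra]. Qed.


Definition ee (t : R) : Cpx := (cos t, sin t).

Lemma Cmul_assoc a b d : Cmul a (Cmul b d) = Cmul (Cmul a b) d.
Proof. destruct a, b, d; unfold Cmul; simpl; f_equal; ring. Qed.
Lemma Cmul_comm a b : Cmul a b = Cmul b a.
Proof. destruct a, b; unfold Cmul; simpl; f_equal; ring. Qed.

Lemma Cpow_mul z w n : Cpow (Cmul z w) n = Cmul (Cpow z n) (Cpow w n).
Proof. induction n; simpl.
 - unfold Cmul; simpl; f_equal; ring.
 - rewrite IHn. destruct z, w, (Cpow (r,r0) n), (Cpow (r1, r2) n); unfold Cmul; simpl; f_equal; ring. Qed.

Lemma Cpow_ee t n : Cpow (ee t) n = ee (INR n * t).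
Proof. induction n; simpl Cpow.
 - unfold ee; simpl; rewrite Rmult_0_l, cos_0, sin_0; auto.
 - rewrite IHn. unfold ee, Cmul; simpl fst; simpl snd. rewrite S_INR.
   replace ((INR n + 1) * t) with (t + INR n * t) by ring. rewrite cos_plus, sin_plus; f_equal; ring. Qed.

Lemma Cmod_mul z w : Cmod (Cmul z w) = Cmod z * Cmod w.
Proof. destruct z as [a b], w as [c d]; unfold Cmod, Cmul; simpl.
 rewrite <- sqrt_mult by nra. f_equal; ring. Qed.

Lemma Cmod_ee t : Cmod (ee t) = 1.
Proof. unfold Cmod, ee; simpl. rewrite <- sqrt_1. f_equal. pose proof (sin2_cos2 t). unfold Rsqr in H; lra. Qed.

Lemma Cmod_pow z n : Cmod (Cpow z n) = Cmod z ^ n.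
Proof. induction n; simpl.
 - unfold Cmod; simpl. replace (1*1+0*0) with 1 by ring. apply sqrt_1.
 - rewrite Cmod_mul, IHn; auto. Qed.

Lemma Cmod_fst z : Rabs (fst z) <= Cmod z.
Proof. destruct z as [a b]; unfold Cmod; simpl. rewrite <- sqrt_Rsqr_abs. apply sqrt_le_1_alt. unfold Rsqr; nra. Qed.
Lemma Cmod_snd z : Rabs (snd z) <= Cmod z.
Proof. destruct z as [a b]; unfold Cmod; simpl. rewrite <- sqrt_Rsqr_abs. apply sqrt_le_1_alt. unfold Rsqr; nra. Qed.
Lemma Cmod_pos z : 0 <= Cmod z.
Proof. unfold Cmod; apply sqrt_pos. Qed.

Lemma term_rot c z t n :
  fst (Cmul c (Cpow (Cmul z (ee t)) n)) =
  fst (Cmul c (Cpow z n)) * cos (INR n * t) - snd (Cmul c (Cpow z n)) * sin (INR n * t).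
Proof. rewrite Cpow_mul, Cpow_ee, Cmul_assoc. destruct (Cmul c (Cpow z n)); unfold Cmul, ee; simpl; ring. Qed.

Lemma Cpow_real x n : Cpow (x, 0) n = (x ^ n, 0).
Proof. induction n; simpl; auto. rewrite IHn; unfold Cmul; simpl; f_equal; ring. Qed.


Lemma sinZ x k : sin (x + 2 * IZR k * PI) = sin x.
Proof. destruct k as [|p|p].
 - rewrite Rmult_0_r, Rmult_0_l, Rplus_0_r; auto.
 - replace (IZR (Z.pos p)) with (INR (Pos.to_nat p)). apply sin_period.
   rewrite INR_IZR_INZ, positive_nat_Z; auto.
 - replace (IZR (Z.neg p)) with (- INR (Pos.to_nat p)).
   2:{ rewrite INR_IZR_INZ, positive_nat_Z, <- opp_IZR; auto. }
   rewrite <- (sin_period (x + 2 * - INR (Pos.to_nat p) * PI) (Pos.to_nat p)).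
   f_equal; ring. Qed.

Lemma cos_sum_zero (m : Z) (M : nat) g :
  (0 < Z.abs m < Z.of_nat M)%Z ->
  fsum (fun j => cos (IZR m * (2 * PI * INR j / INR M) + g)) M = 0.
Proof. intros Hm.
 assert (HM : 0 < INR M). { rewrite INR_IZR_INZ. apply IZR_lt. lia. }
 set (d := 2 * PI * IZR m / INR M). set (h := d / 2).
 set (f := fun j => sin (g - h + INR j * d)).
 assert (Hs : sin h <> 0).
 { assert (Hlt : Rabs (IZR m) < INR M).
   { rewrite <- abs_IZR, INR_IZR_INZ. apply IZR_lt; lia. }
   assert (h = PI * (IZR m / INR M)) by (unfold h, d; field; lra).
   assert (Hq : Rabs (IZR m / INR M) < 1).
   { unfold Rdiv; rewrite Rabs_mult, Rabs_inv, (Rabs_pos_eq (INR M)) by lra.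
     apply (Rmult_lt_reg_r (INR M)); auto. rewrite Rmult_assoc, Rinv_l by lra. lra. }
   pose proof PI_RGT_0.
   destruct (Z_lt_le_dec 0 m).
   - assert (0 < IZR m / INR M). { apply Rdiv_lt_0_compat; auto. apply IZR_lt; auto. }
     rewrite Rabs_pos_eq in Hq by lra. apply Rgt_not_eq, sin_gt_0; rewrite H; nra.
   - assert (m <> 0)%Z by lia. assert (IZR m / INR M < 0).
     { apply Rdiv_neg_pos; auto. apply IZR_lt; lia. }
     rewrite Rabs_left in Hq by lra. apply Rlt_not_eq, sin_lt_0_var; rewrite H; nra. }
 assert (Hst : forall j, f (S j) - f j = 2 * sin h * cos (IZR m * (2 * PI * INR j / INR M) + g)).
 { intros j; unfold f. rewrite form4, S_INR.
   replace ((g - h + (INR j + 1) * d + (g - h + INR j * d)) / 2) with (IZR m * (2 * PI * INR j / INR M) + g)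
     by (unfold h, d; field; lra).
   replace ((g - h + (INR j + 1) * d - (g - h + INR j * d)) / 2) with h by (unfold h; field). ring. }
 assert (Hsum : fsum (fun j => f (S j) - f j) M = 0).
 { rewrite fsum_tele. unfold f. simpl INR. 
   replace (g - h + INR M * d) with ((g - h + 0 * d) + 2 * IZR m * PI) by (unfold d; field; lra).
   rewrite sinZ. ring. }
 rewrite (fsum_ext _ (fun j => /(2 * sin h) * (f (S j) - f j))).
 - rewrite fsum_scal, Hsum; ring.
 - intros j _. rewrite Hst. field; auto. Qed.


Definition avg (M : nat) (g : R -> R) : R :=
  fsum (fun j => g (2 * PI * INR j / INR M)) M / INR M.

Lemma avg_plus M f g : avg M (fun t => f t + g t) = avg M f + avg M g.
Proof. unfold avg; rewrite fsum_plus; unfold Rdiv; ring. Qed.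
Lemma avg_scal M a f : avg M (fun t => a * f t) = a * avg M f.
Proof. unfold avg; rewrite fsum_scal; unfold Rdiv; ring. Qed.
Lemma avg_ext M f g : (forall t, f t = g t) -> avg M f = avg M g.
Proof. intros H; unfold avg; f_equal; apply fsum_ext; auto. Qed.
Lemma avg_le M f g : (0 < M)%nat -> (forall t, f t <= g t) -> avg M f <= avg M g.
Proof. intros HM H; unfold avg, Rdiv. apply Rmult_le_compat_r.
 - apply Rlt_le, Rinv_0_lt_compat, lt_0_INR; auto.
 - apply fsum_le; auto. Qed.
Lemma avg_const M a : (0 < M)%nat -> avg M (fun _ => a) = a.
Proof. intros HM; unfold avg; rewrite fsum_const. field. apply not_0_INR; lia. Qed.
Lemma avg_cos M m g : (0 < Z.abs m < Z.of_nat M)%Z -> avg M (fun t => cos (IZR m * t + g)) = 0.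
Proof. intros H; unfold avg; rewrite cos_sum_zero by auto. unfold Rdiv; ring. Qed.

Fixpoint Sel (n : nat -> nat) (sel : nat -> bool) (N : nat) : nat :=
  match N with O => O | S k => (Sel n sel k + if sel k then n k else O)%nat end.
Fixpoint Pr (n : nat -> nat) (sel : nat -> bool) (psi : R) (N : nat) (t : R) : R :=
  match N with O => 1 | S k => Pr n sel psi k t * (if sel k then 1 + cos (INR (n k) * t + psi) else 1) end.

Definition G n sel psi M N (m : Z) g := avg M (fun t => cos (IZR m * t + g) * Pr n sel psi N t).

Lemma Pr_bound n sel psi N t : 0 <= Pr n sel psi N t <= 2 ^ N.
Proof. induction N; simpl; [lra|]. pose proof (COS_bound (INR (n N) * t + psi)).
 destruct (sel N); nra. Qed.

Lemma G_rec_sel n sel psi M N m g : sel N = true ->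
  G n sel psi M (S N) m g = G n sel psi M N m g + /2 * G n sel psi M N (m + Z.of_nat (n N)) (g + psi)
     + /2 * G n sel psi M N (m - Z.of_nat (n N)) (g - psi).
Proof. intros Hs; unfold G. rewrite <- !avg_scal, <- !avg_plus. apply avg_ext; intros t.
 simpl Pr; rewrite Hs. rewrite plus_IZR, minus_IZR, <- INR_IZR_INZ.
 set (a := IZR m * t + g). set (b := INR (n N) * t + psi).
 replace ((IZR m + INR (n N)) * t + (g + psi)) with (a + b) by (unfold a, b; ring).
 replace ((IZR m - INR (n N)) * t + (g - psi)) with (a - b) by (unfold a, b; ring).
 rewrite cos_plus, cos_minus. field. Qed.

Lemma G_rec_nsel n sel psi M N m g : sel N = false ->
  G n sel psi M (S N) m g = G n sel psi M N m g.
Proof. intros Hs; unfold G. apply avg_ext; intros t. simpl Pr; rewrite Hs; ring. Qed.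

Lemma G_support n sel psi M N : forall m g,
  (Z.of_nat (Sel n sel N) < Z.abs m)%Z -> (Z.abs m + Z.of_nat (Sel n sel N) < Z.of_nat M)%Z ->
  G n sel psi M N m g = 0.
Proof. induction N; intros m g H1 H2.
 - unfold G; simpl Pr. rewrite (avg_ext _ _ (fun t => cos (IZR m * t + g))) by (intros; ring).
   apply avg_cos. simpl in *; lia.
 - simpl Sel in *. destruct (sel N) eqn:E.
   + rewrite G_rec_sel by auto. rewrite !IHN by lia. ring.
   + rewrite G_rec_nsel by auto. apply IHN; lia. Qed.

Lemma G_zero_freq n sel psi M N g :
  (forall N, sel N = true -> 2 * Sel n sel N < n N)%nat ->
  (Sel n sel N < M)%nat -> G n sel psi M N 0 g = cos g.
Proof. intros H1. revert g; induction N; intros g H.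
 - unfold G; simpl Pr. rewrite (avg_ext _ _ (fun t => cos g)).
   + apply avg_const; lia.
   + intros t; rewrite Rmult_0_l, Rplus_0_l; ring.
 - simpl Sel in *. destruct (sel N) eqn:E.
   + specialize (H1 N E). rewrite G_rec_sel by auto. rewrite IHN by lia.
     rewrite !G_support by lia. ring.
   + rewrite G_rec_nsel by auto. apply IHN; lia. Qed.

Lemma Sel_ge n sel N k : sel k = true -> (k < N)%nat -> (n k <= Sel n sel N)%nat.
Proof. intros Hs; induction N; intros H; [lia|]. simpl.
 destruct (Nat.eq_dec k N). - subst; rewrite Hs; lia. - specialize (IHN ltac:(lia)); destruct (sel N); lia. Qed.

Lemma G_other n sel psi M N :
  (forall k, (1 <= n k)%nat) ->
  (forall N k, sel N = true -> k <> N -> (Z.of_nat (Sel n sel N) < Z.abs (Z.of_nat (n k) - Z.of_nat (n N)))%Z) ->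
  (forall N, sel N = true -> 2 * Sel n sel N < n N)%nat ->
  forall k g, ~ (sel k = true /\ (k < N)%nat) -> (n k + Sel n sel N < M)%nat ->
  G n sel psi M N (Z.of_nat (n k)) g = 0.
Proof. intros Hn H2 H1. induction N; intros k g Hk HM.
 - unfold G; simpl Pr. rewrite (avg_ext _ _ (fun t => cos (IZR (Z.of_nat (n k)) * t + g))) by (intros; ring).
   apply avg_cos. specialize (Hn k). simpl in *; lia.
 - simpl Sel in *. destruct (sel N) eqn:E.
   + assert (k <> N) by (intro; subst; apply Hk; split; auto).
     specialize (H2 N k E H). specialize (H1 N E).
     rewrite G_rec_sel by auto. rewrite IHN by (try lia; intros [? ?]; apply Hk; split; auto; lia).
     rewrite !G_support by lia. ring.
   + rewrite G_rec_nsel by auto. apply IHN; [|lia].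
     intros [? ?]; apply Hk; split; auto; lia. Qed.

Lemma G_exact n sel psi M N :
  (forall N, sel N = true -> 2 * Sel n sel N < n N)%nat ->
  forall k g, sel k = true -> (k < N)%nat -> (n k + Sel n sel N < M)%nat ->
  G n sel psi M N (Z.of_nat (n k)) g = /2 * cos (g - psi).
Proof. intros H1. induction N; intros k g Hs Hk HM; [lia|].
 simpl Sel in *. destruct (sel N) eqn:E.
 - pose proof (H1 N E) as H1N. rewrite G_rec_sel by auto.
   destruct (Nat.eq_dec k N).
   + subst. rewrite Z.sub_diag, G_zero_freq by (auto; lia).
     rewrite !G_support by lia. ring.
   + assert (n k <= Sel n sel N)%nat by (apply Sel_ge; auto; lia).
     rewrite IHN by (auto; lia). rewrite !G_support by lia. ring.
 - rewrite G_rec_nsel by auto. assert (k <> N) by (intro; subst; congruence).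
   apply IHN; auto; lia. Qed.


Lemma cv_const a : Un_cv (fun _ => a) a.
Proof. intros e He; exists O; intros; unfold Rdist; rewrite Rminus_diag, Rabs_R0; lra. Qed.

Lemma avg_sum M (f : nat -> R -> R) N :
  sum_f_R0 (fun k => avg M (f k)) N = avg M (fun t => sum_f_R0 (fun k => f k t) N).
Proof. unfold avg, Rdiv. rewrite <- (scal_sum (fun k => fsum (fun j => f k (2 * PI * INR j * / INR M)) M)).
 rewrite (fsum_swap (fun j k => f k (2 * PI * INR j * / INR M))). ring. Qed.

Lemma avg_cv M (h : nat -> R -> R) l :
  (forall t, Un_cv (fun N => h N t) (l t)) -> Un_cv (fun N => avg M (h N)) (avg M l).
Proof. intros H. unfold avg, Rdiv. apply CV_mult; [|apply cv_const].
 apply (fsum_cv (fun j N => h N (2 * PI * INR j * / INR M))). intros; apply H. Qed.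

Lemma sum_scal_l a (f : nat -> R) N : sum_f_R0 (fun k => a * f k) N = a * sum_f_R0 f N.
Proof. rewrite scal_sum. apply sum_eq; intros; ring. Qed.

Lemma cos_PI2_shift x : cos (x + PI / 2) = - sin x.
Proof. rewrite cos_plus, cos_PI2, sin_PI2; ring. Qed.

Lemma main_lemma (n : nat -> nat) (sel : nat -> bool) (psi : R) (al be : nat -> R)
  (Uf : R -> R) (B0 : R) :
  (forall k, (1 <= n k)%nat) ->
  (forall N k, sel N = true -> k <> N -> (Z.of_nat (Sel n sel N) < Z.abs (Z.of_nat (n k) - Z.of_nat (n N)))%Z) ->
  (forall N, sel N = true -> 2 * Sel n sel N < n N)%nat ->
  (forall k k', (k < k')%nat -> (n k < n k')%nat) ->
  (forall t, Un_cv (fun N => sum_f_R0 (fun k => al k * cos (INR (n k) * t) - be k * sin (INR (n k) * t)) N) (Uf t)) ->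
  (forall t, Uf t <= B0) ->
  (forall eps, 0 < eps -> exists K0, forall N,
     sum_f_R0 (fun k => if (K0 <=? k)%nat then Rabs (al k) + Rabs (be k) else 0) N <= eps) ->
  forall N0, sum_f_R0 (fun k => if (sel k && (k <? N0))%bool then al k * cos psi + be k * sin psi else 0) N0 <= 2 * B0.
Proof.
 intros Hn H2 H1 Hmono Hconv Hub Htail N0.
 set (e := fun k => if (sel k && (k <? N0))%bool then al k * cos psi + be k * sin psi else 0).
 set (Sg := Sel n sel N0). set (W := Pr n sel psi N0). set (Bw := 2 ^ N0).
 assert (HBw : 0 < Bw) by (apply pow_lt; lra).
 cut (forall eps, 0 < eps -> /2 * sum_f_R0 e N0 - Bw * eps <= B0).
 { intros Hc. apply Rnot_lt_le; intros Hlt.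
   set (d := /2 * sum_f_R0 e N0 - B0).
   assert (Hd : 0 < d) by (unfold d; lra).
   specialize (Hc (d / (2 * Bw)) ltac:(apply Rdiv_lt_0_compat; lra)).
   replace (Bw * (d / (2 * Bw))) with (d / 2) in Hc by (field; lra). unfold d in Hc; lra. }
 intros eps Heps.
 destruct (Htail eps Heps) as [K0 HK0].
 set (M := (n K0 + 2 * Sg + 1)%nat).
 set (A := fun k => avg M (fun t => (al k * cos (INR (n k) * t) - be k * sin (INR (n k) * t)) * W t)).
 assert (Hlim : Un_cv (fun N => sum_f_R0 A N) (avg M (fun t => Uf t * W t))).
 { unfold A. eapply Un_cv_ext.
   - intros N. symmetry. apply avg_sum.
   - apply avg_cv. intros t. eapply Un_cv_ext.
     + intros N. exact (scal_sum _ N (W t)).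
     + rewrite (Rmult_comm (Uf t)). apply CV_mult; [apply cv_const|apply Hconv]. }
 assert (HM : (0 < M)%nat) by (unfold M; lia).
 assert (Hup : avg M (fun t => Uf t * W t) <= B0).
 { apply Rle_trans with (avg M (fun t => B0 * W t)).
   - apply avg_le; auto. intros t. apply Rmult_le_compat_r; [apply Pr_bound|apply Hub].
   - rewrite avg_scal. replace (avg M W) with (G n sel psi M N0 0 0).
     + rewrite G_zero_freq; auto. rewrite cos_0; lra. unfold M, Sg; lia.
     + unfold G. apply avg_ext; intros t. change (IZR 0) with 0. rewrite Rmult_0_l, Rplus_0_l, cos_0. unfold W; ring. }
 assert (HA : forall k, /2 * e k - Bw * (if (K0 <=? k)%nat then Rabs (al k) + Rabs (be k) else 0) <= A k).
 { intros k.
   assert (HAk : A k = al k * G n sel psi M N0 (Z.of_nat (n k)) 0 + be k * G n sel psi M N0 (Z.of_nat (n k)) (PI / 2)).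
   { unfold A, G. rewrite <- !avg_scal, <- avg_plus. apply avg_ext; intros t.
     rewrite <- INR_IZR_INZ, Rplus_0_r, cos_PI2_shift. fold W; ring. }
   destruct (lt_dec (n k + Sg) M) as [Hlt|Hge].
   - assert (Hr : 0 <= Bw * (if (K0 <=? k)%nat then Rabs (al k) + Rabs (be k) else 0)).
     { apply Rmult_le_pos; [lra|]. destruct (K0 <=? k)%nat; [pose proof (Rabs_pos (al k)); pose proof (Rabs_pos (be k)); lra|lra]. }
     unfold e. destruct (sel k && (k <? N0))%bool eqn:Ek.
     + apply andb_prop in Ek; destruct Ek as [Es Ek]. apply Nat.ltb_lt in Ek.
       rewrite HAk, !G_exact by auto. rewrite cos_shift. replace (0 - psi) with (- psi) by ring. rewrite cos_neg. ring_simplify. lra.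
     + rewrite HAk, !G_other; auto.
       * lra.
       * intros [Es Ek']. apply Nat.ltb_lt in Ek'. rewrite Es, Ek' in Ek; discriminate.
       * intros [Es Ek']. apply Nat.ltb_lt in Ek'. rewrite Es, Ek' in Ek; discriminate.
   - assert (HkK : (K0 < k)%nat).
     { destruct (lt_dec K0 k); auto. exfalso.
       assert (n k <= n K0)%nat. { destruct (Nat.eq_dec k K0); [subst; lia|]. assert (k < K0)%nat by lia. specialize (Hmono _ _ H); lia. }
       unfold M in Hge; lia. }
     assert (Eb : (K0 <=? k)%nat = true) by (apply Nat.leb_le; lia). rewrite Eb.
     assert (Ee : e k = 0).
     { unfold e. destruct (sel k && (k <? N0))%bool eqn:Ek; auto.
       apply andb_prop in Ek; destruct Ek as [Es Ek]. apply Nat.ltb_lt in Ek.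
       pose proof (Sel_ge n sel N0 k Es Ek). unfold M, Sg in *; lia. }
     rewrite Ee.
     assert (Hb : forall t, -((Rabs (al k) + Rabs (be k)) * Bw) <=
                 (al k * cos (INR (n k) * t) - be k * sin (INR (n k) * t)) * W t).
     { intros t. pose proof (Pr_bound n sel psi N0 t). fold W Bw in H.
       assert (Rabs (al k * cos (INR (n k) * t) - be k * sin (INR (n k) * t)) <= Rabs (al k) + Rabs (be k)).
       { unfold Rminus. eapply Rle_trans; [apply Rabs_triang|]. rewrite Rabs_Ropp, !Rabs_mult.
         pose proof (COS_bound (INR (n k) * t)); pose proof (SIN_bound (INR (n k) * t)).
         assert (Rabs (cos (INR (n k) * t)) <= 1) by (apply Rabs_le; lra).
         assert (Rabs (sin (INR (n k) * t)) <= 1) by (apply Rabs_le; lra).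
         pose proof (Rabs_pos (al k)); pose proof (Rabs_pos (be k)).
         pose proof (Rabs_pos (cos (INR (n k) * t))); pose proof (Rabs_pos (sin (INR (n k) * t))). nra. }
       set (X := al k * cos (INR (n k) * t) - be k * sin (INR (n k) * t)) in *. pose proof (Rle_abs (- X)). rewrite Rabs_Ropp in H3. destruct H. pose proof (Rabs_pos X). nra.
       }
     apply Rle_trans with (avg M (fun _ => - ((Rabs (al k) + Rabs (be k)) * Bw))).
     + rewrite avg_const by auto. lra.
     + apply avg_le; auto. }
 assert (He : forall p, sum_f_R0 e (p + N0) = sum_f_R0 e N0).
 { induction p; auto. replace (S p + N0)%nat with (S (p + N0)) by lia. simpl. rewrite IHp.
   unfold e at 2. replace (S (p + N0) <? N0)%nat with false. destruct (sel _); simpl; ring.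
   symmetry; apply Nat.ltb_ge; lia. }
 apply Rle_trans with (avg M (fun t => Uf t * W t)); auto.
 apply Rle_cv_lim with (Un := fun p => /2 * sum_f_R0 e N0 - Bw * eps) (Vn := fun p => sum_f_R0 A (p + N0)).
 - intros p. rewrite <- (He p). apply Rle_trans with (sum_f_R0 (fun k => /2 * e k - Bw * (if (K0 <=? k)%nat then Rabs (al k) + Rabs (be k) else 0)) (p + N0)).
   + rewrite minus_sum, !sum_scal_l. specialize (HK0 (p + N0)%nat). nra.
   + apply sum_Rle; intros; apply HA.
 - apply cv_const.
 - apply CV_shift'; auto.
Qed.


Lemma gap_mono (n : nat -> nat) lam : hadamard_gap n lam ->
  forall k k', (k < k')%nat -> (n k < n k')%nat.
Proof. intros [Hl [Hn Hg]].
 assert (Hs : forall k, (n k < n (S k))%nat).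
 { intros k. apply INR_lt. specialize (Hg k). specialize (Hn k). apply le_INR in Hn. simpl in Hn. nra. }
 intros k k' H. induction H; auto. specialize (Hs m); lia. Qed.

Lemma gap_pow (n : nat -> nat) lam : hadamard_gap n lam ->
  forall a d : nat, lam ^ d * INR (n a) <= INR (n (a + d)%nat).
Proof. intros [Hl [Hn Hg]] a d. induction d.
 - simpl; rewrite Nat.add_0_r; lra.
 - replace (a + S d)%nat with (S (a + d)) by lia. specialize (Hg (a + d)%nat). simpl. nra. Qed.

Lemma gap_ge (n : nat -> nat) lam : hadamard_gap n lam -> forall k, (k <= n k)%nat.
Proof. intros H k. pose proof (gap_mono n lam H). destruct H as [_ [Hn _]].
 induction k. - lia. - specialize (H0 k (S k) ltac:(lia)); lia. Qed.

Lemma bernoulli lam q : 1 <= lam -> 1 + INR q * (lam - 1) <= lam ^ q.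
Proof. intros H; induction q. - simpl; lra. - rewrite S_INR; simpl.
 pose proof (pos_INR q). assert (lam * (1 + INR q * (lam - 1)) <= lam * lam ^ q) by (apply Rmult_le_compat_l; lra).
 assert (0 <= INR q * ((lam - 1) * (lam - 1))) by (apply Rmult_le_pos; nra). nra. Qed.

Lemma exists_q lam : 1 < lam -> exists q : nat, (1 <= q)%nat /\ 2 + lam / (lam - 1) < INR q * (lam - 1).
Proof. intros H. set (T := (2 + lam / (lam - 1)) / (lam - 1)).
 assert (HT : 0 < T). { unfold T. apply Rdiv_lt_0_compat; [|lra]. assert (0 < lam / (lam - 1)) by (apply Rdiv_lt_0_compat; lra). lra. }
 destruct (archimed T) as [H1 _].
 exists (Z.to_nat (up T)).
 assert (Hup : (0 < up T)%Z) by (apply lt_IZR; lra).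
 assert (HI : INR (Z.to_nat (up T)) = IZR (up T)) by (rewrite INR_IZR_INZ, Z2Nat.id; auto; lia).
 split; [lia|]. rewrite HI.
 assert (HTe : T * (lam - 1) = 2 + lam / (lam - 1)) by (unfold T; field; lra).
 rewrite <- HTe. apply Rmult_lt_compat_r; lra. Qed.

Definition selc (q c k : nat) : bool := Nat.eqb (k mod q) c.

Lemma selc_sep q c k N : (1 <= q)%nat -> selc q c k = true -> selc q c N = true -> (k < N)%nat -> (k + q <= N)%nat.
Proof. unfold selc; intros Hq H1 H2 H. apply Nat.eqb_eq in H1, H2.
 pose proof (Nat.div_mod_eq k q). pose proof (Nat.div_mod_eq N q).
 assert (k / q < N / q)%nat by nia. nia. Qed.

Lemma sel_sparse (n : nat -> nat) lam q c : hadamard_gap n lam -> (1 <= q)%nat ->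
  forall N j, (forall k, (k < N)%nat -> selc q c k = true -> (k + q <= j)%nat) ->
  (lam ^ q - 1) * INR (Sel n (selc q c) N) <= INR (n j).
Proof. intros Hg Hq. pose proof (gap_pow n lam Hg) as Hp. pose proof (gap_mono n lam Hg) as Hm.
 destruct Hg as [Hl [Hn _]].
 assert (Hlq : 1 <= lam ^ q) by (apply pow_R1_Rle; lra).
 induction N; intros j Hj.
 - simpl. rewrite Rmult_0_r. apply pos_INR.
 - simpl Sel. destruct (selc q c N) eqn:E.
   + assert (HNj : (N + q <= j)%nat) by (apply Hj; auto).
     assert (IH : (lam ^ q - 1) * INR (Sel n (selc q c) N) <= INR (n N)).
     { apply IHN. intros k Hk Hs. exact (selc_sep q c k N Hq Hs E Hk). }
     assert (INR (n (N + q)%nat) <= INR (n j)).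
     { apply le_INR. destruct (Nat.eq_dec (N+q)%nat j). subst; lia. apply Nat.lt_le_incl, Hm; lia. }
     specialize (Hp N q). rewrite plus_INR. nra.
   + rewrite Nat.add_0_r. apply IHN. intros k Hk Hs; apply Hj; auto. Qed.

Lemma sel_self (n : nat -> nat) lam q c N : hadamard_gap n lam -> (1 <= q)%nat -> selc q c N = true ->
  (lam ^ q - 1) * INR (Sel n (selc q c) N) <= INR (n N).
Proof. intros Hg Hq Hs. apply sel_sparse; auto. intros k Hk Hk'. exact (selc_sep q c k N Hq Hk' Hs Hk). Qed.

Lemma sel_H1 (n : nat -> nat) lam q c : hadamard_gap n lam -> (1 <= q)%nat ->
  2 + lam / (lam - 1) < INR q * (lam - 1) ->
  forall N, selc q c N = true -> (2 * Sel n (selc q c) N < n N)%nat.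
Proof. intros Hg Hq HQ N Hs. pose proof (sel_self n lam q c N Hg Hq Hs) as H.
 pose proof Hg as [Hl [Hn _]]. pose proof (bernoulli lam q ltac:(lra)).
 assert (0 < lam / (lam - 1)) by (apply Rdiv_lt_0_compat; lra).
 apply INR_lt. rewrite mult_INR. simpl (INR 2).
 pose proof (pos_INR (Sel n (selc q c) N)). pose proof (le_INR _ _ (Hn N)) as H4. simpl in H4. nra. Qed.

Lemma sel_H2 (n : nat -> nat) lam q c : hadamard_gap n lam -> (1 <= q)%nat ->
  2 + lam / (lam - 1) < INR q * (lam - 1) ->
  forall N k, selc q c N = true -> k <> N ->
  (Z.of_nat (Sel n (selc q c) N) < Z.abs (Z.of_nat (n k) - Z.of_nat (n N)))%Z.
Proof. intros Hg Hq HQ N k Hs Hk. pose proof (sel_self n lam q c N Hg Hq Hs) as H.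
 pose proof (gap_pow n lam Hg) as Hp. pose proof (gap_mono n lam Hg) as Hm.
 pose proof Hg as [Hl [Hn _]]. pose proof (bernoulli lam q ltac:(lra)).
 set (S0 := Sel n (selc q c) N) in *.
 assert (HL : (lam ^ q - 1) * (lam - 1) > lam).
 { assert (lam / (lam - 1) * (lam - 1) = lam) by (field; lra). nra. }
 assert (HnN : 1 <= INR (n N)) by (apply (le_INR 1); auto).
 assert (HS : lam * INR S0 < (lam - 1) * INR (n N)).
 { pose proof (pos_INR S0). apply (Rmult_lt_reg_r (lam ^ q - 1)); [nra|]. nra. }
 destruct (lt_dec k N).
 - assert (lam * INR (n k) <= INR (n N)).
   { pose proof (Hp k 1%nat). simpl in H1. rewrite Rmult_1_r in H1.
     apply Rle_trans with (INR (n (k + 1)%nat)). lra. apply le_INR.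
     destruct (Nat.eq_dec (k+1)%nat N). subst; lia. apply Nat.lt_le_incl, Hm; lia. }
   assert (INR S0 + INR (n k) < INR (n N)) by nra.
   rewrite <- !plus_INR in H2. apply INR_lt in H2. lia.
 - assert (lam * INR (n N) <= INR (n k)).
   { pose proof (Hp N 1%nat). simpl in H1. rewrite Rmult_1_r in H1.
     apply Rle_trans with (INR (n (N + 1)%nat)). lra. apply le_INR.
     destruct (Nat.eq_dec (N+1)%nat k). subst; lia. apply Nat.lt_le_incl, Hm; lia. }
   assert (lam * (lam * INR (n N)) <= lam * INR (n k)) by (apply Rmult_le_compat_l; lra).
   assert (0 <= (lam - 1) * (lam - 1) * INR (n N)) by (apply Rmult_le_pos; nra).
   assert (lam * (INR S0 + INR (n N)) < lam * INR (n k)) by nra.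
   assert (Hf : INR S0 + INR (n N) < INR (n k)) by (apply (Rmult_lt_reg_l lam); lra).
   rewrite <- !plus_INR in Hf. apply INR_lt in Hf. lia. Qed.


Lemma terms_bounded (a : nat -> R) l : Un_cv (fun N => sum_f_R0 a N) l ->
  exists B, 0 < B /\ forall k, Rabs (a k) <= B.
Proof. intros H. destruct (maj_by_pos _ (exist _ l H)) as [B [HB HB']].
 exists (2 * B); split; [lra|]. intros [|k].
 - specialize (HB' O); simpl in HB'; lra.
 - replace (a (S k)) with (sum_f_R0 a (S k) - sum_f_R0 a k) by (simpl; ring).
   unfold Rminus; eapply Rle_trans; [apply Rabs_triang|]. rewrite Rabs_Ropp.
   pose proof (HB' (S k)); pose proof (HB' k); lra. Qed.

Lemma geom_tail x K0 : 0 <= x < 1 -> forall N,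
  sum_f_R0 (fun k => if (K0 <=? k)%nat then x ^ k else 0) N * (1 - x) =
  if (K0 <=? N)%nat then x ^ K0 - x ^ (S N) else 0.
Proof. intros Hx N. induction N.
 - simpl. destruct (K0 <=? 0)%nat eqn:E; [apply Nat.leb_le in E; replace K0 with O by lia; simpl; ring|ring].
 - simpl sum_f_R0. rewrite Rmult_plus_distr_r, IHN.
   destruct (K0 <=? N)%nat eqn:E1; destruct (K0 <=? S N)%nat eqn:E2.
   + simpl; ring.
   + apply Nat.leb_le in E1; apply Nat.leb_gt in E2; lia.
   + apply Nat.leb_gt in E1; apply Nat.leb_le in E2. replace K0 with (S N) by lia. simpl; ring.
   + ring. Qed.

Lemma geom_tail_le x K0 N : 0 <= x < 1 ->
  sum_f_R0 (fun k => if (K0 <=? k)%nat then x ^ k else 0) N <= x ^ K0 / (1 - x).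
Proof. intros Hx. apply (Rmult_le_reg_r (1 - x)); [lra|].
 rewrite geom_tail by auto. unfold Rdiv; rewrite Rmult_assoc, Rinv_l, Rmult_1_r by lra.
 pose proof (pow_le x K0 ltac:(lra)). destruct (K0 <=? N)%nat; [|lra].
 pose proof (pow_le x (S N) ltac:(lra)). lra. Qed.

Lemma pow_dec x k m : 0 <= x <= 1 -> (k <= m)%nat -> x ^ m <= x ^ k.
Proof. intros Hx H. induction H; [lra|]. simpl.
 pose proof (pow_le x m ltac:(lra)). nra. Qed.

Lemma tail_lemma (lam : R) (n : nat -> nat) (c : nat -> Cpx) (U V : Cpx -> R) z :
  hadamard_gap n lam ->
  (forall z, in_disc z ->
     Un_cv (fun N => fst (gap_partial c n z N)) (U z) /\
     Un_cv (fun N => snd (gap_partial c n z N)) (V z)) ->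
  in_disc z ->
  forall eps, 0 < eps -> exists K0, forall N,
   sum_f_R0 (fun k => if (K0 <=? k)%nat then Rabs (fst (Cmul (c k) (Cpow z (n k)))) + Rabs (snd (Cmul (c k) (Cpow z (n k)))) else 0) N <= eps.
Proof.
 intros Hg Hcv Hz eps Heps. unfold in_disc in Hz.
 set (r := Cmod z) in *. pose proof (Cmod_pos z) as Hr. fold r in Hr.
 set (rho := (1 + r) / 2). set (x := r / rho).
 assert (Hrho : 0 < rho < 1) by (unfold rho; lra).
 assert (Hx : 0 <= x < 1).
 { unfold x; split. unfold Rdiv; apply Rmult_le_pos; [lra|apply Rlt_le, Rinv_0_lt_compat; lra]. apply (Rmult_lt_reg_r rho); [lra|].
   unfold Rdiv; rewrite Rmult_assoc, Rinv_l by lra. unfold rho; lra. }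
 assert (Hd : in_disc (rho, 0)).
 { unfold in_disc, Cmod; simpl. replace (rho * rho + 0 * 0) with (rho * rho) by ring. rewrite sqrt_square; lra. }
 destruct (Hcv _ Hd) as [H1 H2].
 assert (E1 : forall N, fst (gap_partial c n (rho, 0) N) = sum_f_R0 (fun k => fst (c k) * rho ^ (n k)) N).
 { intros N. unfold gap_partial; simpl fst. apply sum_eq; intros k _. rewrite Cpow_real. unfold Cmul; simpl; ring. }
 assert (E2 : forall N, snd (gap_partial c n (rho, 0) N) = sum_f_R0 (fun k => snd (c k) * rho ^ (n k)) N).
 { intros N. unfold gap_partial; simpl snd. apply sum_eq; intros k _. rewrite Cpow_real. unfold Cmul; simpl; ring. }
 pose proof (Un_cv_ext _ _ E1 _ H1) as H1'. pose proof (Un_cv_ext _ _ E2 _ H2) as H2'.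
 destruct (terms_bounded _ _ H1') as [B1 [HB1 HB1']].
 destruct (terms_bounded _ _ H2') as [B2 [HB2 HB2']].
 set (C := 2 * (B1 + B2)).
 assert (Hterm : forall k, Rabs (fst (Cmul (c k) (Cpow z (n k)))) + Rabs (snd (Cmul (c k) (Cpow z (n k)))) <= C * x ^ k).
 { intros k. set (p := Cpow z (n k)).
   assert (Hp1 : Rabs (fst p) <= r ^ (n k)) by (unfold r; rewrite <- Cmod_pow; apply Cmod_fst).
   assert (Hp2 : Rabs (snd p) <= r ^ (n k)) by (unfold r; rewrite <- Cmod_pow; apply Cmod_snd).
   assert (Hrx : r ^ (n k) = x ^ (n k) * rho ^ (n k)).
   { rewrite <- Rpow_mult_distr. f_equal. unfold x; field; lra. }
   assert (Hc1 : Rabs (fst (c k)) * rho ^ (n k) <= B1).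
   { specialize (HB1' k). rewrite Rabs_mult, (Rabs_pos_eq (rho ^ n k)) in HB1' by (apply pow_le; lra). auto. }
   assert (Hc2 : Rabs (snd (c k)) * rho ^ (n k) <= B2).
   { specialize (HB2' k). rewrite Rabs_mult, (Rabs_pos_eq (rho ^ n k)) in HB2' by (apply pow_le; lra). auto. }
   assert (Hxk : x ^ (n k) <= x ^ k) by (apply pow_dec; [lra|apply (gap_ge n lam Hg)]).
   assert (Hx0 : 0 <= x ^ (n k)) by (apply pow_le; lra).
   assert (Habs : Rabs (fst (c k)) * r ^ (n k) + Rabs (snd (c k)) * r ^ (n k) <= (B1 + B2) * x ^ k).
   { rewrite Hrx. pose proof (Rabs_pos (fst (c k))); pose proof (Rabs_pos (snd (c k))).
     assert (0 <= x ^ k) by (apply pow_le; lra). nra. }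
   destruct (c k) as [c1 c2]; destruct p as [p1 p2]; unfold Cmul; simpl in *.
   pose proof (Rabs_pos c1); pose proof (Rabs_pos c2).
   assert (Rabs (c1 * p1 - c2 * p2) <= Rabs c1 * r ^ n k + Rabs c2 * r ^ n k).
   { unfold Rminus; eapply Rle_trans; [apply Rabs_triang|]. rewrite Rabs_Ropp, !Rabs_mult.
     pose proof (Rabs_pos p1); pose proof (Rabs_pos p2). nra. }
   assert (Rabs (c1 * p2 + c2 * p1) <= Rabs c1 * r ^ n k + Rabs c2 * r ^ n k).
   { eapply Rle_trans; [apply Rabs_triang|]. rewrite !Rabs_mult.
     pose proof (Rabs_pos p1); pose proof (Rabs_pos p2). nra. }
   unfold C; lra. }
 assert (HC : 0 < C) by (unfold C; lra).
 destruct (pow_lt_1_zero x ltac:(rewrite Rabs_pos_eq; lra) (eps * (1 - x) / C)) as [K0 HK0].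
 { apply Rdiv_lt_0_compat; [apply Rmult_lt_0_compat|]; lra. }
 exists K0. intros N.
 apply Rle_trans with (C * sum_f_R0 (fun k => if (K0 <=? k)%nat then x ^ k else 0) N).
 - rewrite scal_sum. apply sum_Rle; intros k _. destruct (K0 <=? k)%nat.
   + rewrite Rmult_comm; apply Hterm. + lra.
 - pose proof (geom_tail_le x K0 N Hx). specialize (HK0 K0 (Nat.le_refl _)).
   rewrite Rabs_pos_eq in HK0 by (apply pow_le; lra).
   apply Rle_trans with (C * (x ^ K0 / (1 - x))). apply Rmult_le_compat_l; lra.
   apply (Rmult_le_reg_r ((1 - x) / C)). apply Rdiv_lt_0_compat; lra.
   replace (C * (x ^ K0 / (1 - x)) * ((1 - x) / C)) with (x ^ K0) by (field; lra).
   replace (eps * ((1 - x) / C)) with (eps * (1 - x) / C) by (field; lra). lra.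
Qed.


Lemma ind_sum0 m a Q : (Q <= m)%nat -> fsum (fun j => if Nat.eqb m j then a else 0) Q = 0.
Proof. induction Q; intros H; cbn [fsum]; [reflexivity|].
 rewrite IHQ by lia. rewrite (proj2 (Nat.eqb_neq m Q)) by lia. ring. Qed.
Lemma ind_sum m a Q : (m < Q)%nat -> fsum (fun j => if Nat.eqb m j then a else 0) Q = a.
Proof. induction Q; intros H; cbn [fsum]; [lia|].
 destruct (Nat.eq_dec m Q).
 - subst. rewrite Nat.eqb_refl, ind_sum0 by lia. ring.
 - rewrite IHQ by lia. rewrite (proj2 (Nat.eqb_neq m Q)) by lia. ring. Qed.

Lemma bound_dir (v : R -> R) (lam : R) (n : nat -> nat) (c : nat -> Cpx) (U V : Cpx -> R) (q : nat) (K : R) :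
  hadamard_gap n lam ->
  (forall z, in_disc z ->
     Un_cv (fun N => fst (gap_partial c n z N)) (U z) /\
     Un_cv (fun N => snd (gap_partial c n z N)) (V z)) ->
  (forall z, in_disc z -> U z <= K * v (Cmod z)) ->
  (1 <= q)%nat -> 2 + lam / (lam - 1) < INR q * (lam - 1) ->
  forall z psi, in_disc z -> cos psi * U z + sin psi * V z <= INR q * (2 * (K * v (Cmod z))).
Proof.
 intros Hg Hcv HU Hq HQ z psi Hz.
 set (al := fun k => fst (Cmul (c k) (Cpow z (n k)))).
 set (be := fun k => snd (Cmul (c k) (Cpow z (n k)))).
 set (y := fun k => al k * cos psi + be k * sin psi).
 set (B0 := K * v (Cmod z)).
 assert (Hcl : forall cl N, sum_f_R0 (fun k => if selc q cl k then y k else 0) N <= 2 * B0).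
 { intros cl N.
   assert (HML := main_lemma n (selc q cl) psi al be (fun t => U (Cmul z (ee t))) B0).
   pose proof Hg as [_ [Hn _]].
   specialize (HML Hn (sel_H2 n lam q cl Hg Hq HQ) (sel_H1 n lam q cl Hg Hq HQ) (gap_mono n lam Hg)).
   assert (Hw : forall t, in_disc (Cmul z (ee t))).
   { intros t; unfold in_disc; rewrite Cmod_mul, Cmod_ee, Rmult_1_r; auto. }
   specialize (HML ltac:(intros t; destruct (Hcv _ (Hw t)) as [H _];
                 eapply Un_cv_ext; [|exact H]; intros N'; unfold gap_partial; cbn [fst];
                 apply sum_eq; intros k _; rewrite term_rot; reflexivity)).
   specialize (HML ltac:(intros t; unfold B0; rewrite <- (Rmult_1_r (Cmod z)), <- (Cmod_ee t), <- Cmod_mul; apply HU; auto)).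
   specialize (HML (tail_lemma lam n c U V z Hg Hcv Hz) (S N)).
   rewrite tech5 in HML. cbv beta in HML.
   assert (E0 : (selc q cl (S N) && (S N <? S N)%nat)%bool = false).
   { rewrite Nat.ltb_irrefl. apply Bool.andb_false_r. }
   rewrite E0, Rplus_0_r in HML.
   replace (sum_f_R0 (fun k => if selc q cl k then y k else 0) N) with
     (sum_f_R0 (fun k => if (selc q cl k && (k <? S N))%bool then al k * cos psi + be k * sin psi else 0) N).
   - exact HML.
   - apply sum_eq; intros k Hk. replace (k <? S N)%nat with true by (symmetry; apply Nat.ltb_lt; lia).
     rewrite Bool.andb_true_r. reflexivity. }
 assert (Hsum : forall N, sum_f_R0 y N <= INR q * (2 * B0)).
 { intros N. replace (sum_f_R0 y N) with (fsum (fun cl => sum_f_R0 (fun k => if selc q cl k then y k else 0) N) q).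
   - rewrite <- fsum_const. apply fsum_le; intros; apply Hcl.
   - rewrite <- (fsum_swap (fun j k => if selc q j k then y k else 0)). apply sum_eq; intros k _.
     unfold selc. rewrite (ind_sum (k mod q) (y k) q); auto. apply Nat.mod_upper_bound; lia. }
 destruct (Hcv z Hz) as [Hu Hv].
 assert (Hu' : Un_cv (fun N => sum_f_R0 al N) (U z)) by exact Hu.
 assert (Hv' : Un_cv (fun N => sum_f_R0 be N) (V z)) by exact Hv.
 assert (Hy : forall N, cos psi * sum_f_R0 al N + sin psi * sum_f_R0 be N = sum_f_R0 y N).
 { intros N. rewrite <- !sum_scal_l, <- sum_plus. apply sum_eq; intros; unfold y; ring. }
 apply Rle_cv_lim with (Un := fun N => sum_f_R0 y N) (Vn := fun _ => INR q * (2 * B0)).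
 - exact Hsum.
 - apply (Un_cv_ext _ _ Hy). apply CV_plus; apply CV_mult; auto; apply cv_const.
 - apply cv_const.
Qed.


Theorem corollary4 (v : R -> R) (lam : R) (n : nat -> nat) (c : nat -> Cpx)
  (U V : Cpx -> R) :
  weight v -> doubling v -> hadamard_gap n lam ->
  (forall z, in_disc z ->
     Un_cv (fun N => fst (gap_partial c n z N)) (U z) /\
     Un_cv (fun N => snd (gap_partial c n z N)) (V z)) ->
  in_k_v v U ->
  in_h_v v U /\ in_h_v v V.
Proof.
 intros _ _ Hg Hcv [K [HK HU]].
 pose proof Hg as [Hl _].
 destruct (exists_q lam Hl) as [q [Hq HQ]].
 pose proof (bound_dir v lam n c U V q K Hg Hcv HU Hq HQ) as Hb.
 assert (Hq1 : 1 <= INR q) by (apply (le_INR 1); auto).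
 assert (HK' : 0 < INR q * (2 * K)) by nra.
 assert (E : forall z, INR q * (2 * (K * v (Cmod z))) = INR q * (2 * K) * v (Cmod z)) by (intros; ring).
 split; exists (INR q * (2 * K)); split; auto; intros z Hz; rewrite <- E; apply Rabs_le; split.
 - pose proof (Hb z PI Hz). rewrite cos_PI, sin_PI in H. lra.
 - pose proof (Hb z 0 Hz). rewrite cos_0, sin_0 in H. lra.
 - pose proof (Hb z (- (PI / 2)) Hz). rewrite cos_neg, sin_neg, cos_PI2, sin_PI2 in H. lra.
 - pose proof (Hb z (PI / 2) Hz). rewrite cos_PI2, sin_PI2 in H. lra.
Qed.
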